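(* Let $G=(V,E,C,\ell)$ be an edge-labeled hypergraph with $C=\{1,\dots,k\}$, and consider the linear program \[ \min \sum_{e\in E} x_e \quad\text{s.t.}\quad \sum_{c=1}^k x_v^c=k-1\ \ \forall v\in V;\qquad x_v^c\le x_e\ \ \forall c\in C,\ \forall e\in E \text{ with } \ell(e)=c,\ \forall v\in e;\qquad 0\le x_v^c\le 1,\ 0\le x_e\le 1. \] Let $(x_v^c,x_e)$ be an optimal solution of this LP. For each $c\in C$ let $S_c=\{v\in V: x_v^c<1/2\}$, set $Y[i]=c$ for every $i\in S_c$, and assign every node lying in no $S_c$ to an arbitrary category. Then $Y$ is a well-defined clustering and $\mathrm{CatEdgeClus}(Y)\le 2\min_{Y':V\to C}\mathrm{CatEdgeClus}(Y')$.
   Context: An edge-labeled hypergraph $G=(V,E,C,\ell)$ consists of a finite node set $V$, a finite collection $E$ of hyperedges (nonempty subsets of $V$), a finite set $C$ of categories, and a labeling $\ell:E\to C$. A clustering is a map $Y:V\to C$. For $e\in E$, $m_Y(e)=1$ if $Y[i]\neq\ell(e)$ for some $i\in e$, and $m_Y(e)=0$ otherwise; $\mathrm{CatEdgeClus}(Y)=\sum_{e\in E}m_Y(e)$. *)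

(* Defs.v *)
From mathcomp Require Import all_boot all_order all_algebra.
Set Implicit Arguments. Unset Strict Implicit. Unset Printing Implicit Defensive.
Import Order.TTheory GRing.Theory Num.Theory.

(* An edge-labeled hypergraph with node set V, hyperedge index set E
   (a finite collection, multiplicities allowed), categories C = 'I_k
   (the paper's {1,...,k}), hyperedge map [edge] and labeling [lab]. *)

Definition mY (V E : finType) (k : nat) (edge : E -> {set V}) (lab : E -> 'I_k)
  (Y : V -> 'I_k) (e : E) : nat :=
  [exists i in edge e, Y i != lab e] : nat.

Definition CatEdgeClus (V E : finType) (k : nat) (edge : E -> {set V})
  (lab : E -> 'I_k) (Y : V -> 'I_k) : nat :=
  \sum_(e : E) mY edge lab Y e.

Local Open Scope ring_scope.

Definition lp_feasible (R : realFieldType) (V E : finType) (k : nat)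
  (edge : E -> {set V}) (lab : E -> 'I_k)
  (xv : V -> 'I_k -> R) (xe : E -> R) : Prop :=
  [/\ (forall v, \sum_(c < k) xv v c = (k%:R - 1)),
      (forall (c : 'I_k) (e : E) (v : V), lab e = c -> v \in edge e -> xv v c <= xe e),
      (forall v c, 0 <= xv v c <= 1) &
      (forall e, 0 <= xe e <= 1)].

Definition lp_objective (R : realFieldType) (E : finType) (xe : E -> R) : R :=
  \sum_(e : E) xe e.

Definition lp_optimal (R : realFieldType) (V E : finType) (k : nat)
  (edge : E -> {set V}) (lab : E -> 'I_k)
  (xv : V -> 'I_k -> R) (xe : E -> R) : Prop :=
  lp_feasible edge lab xv xe /\
  forall (yv : V -> 'I_k -> R) (ye : E -> R),
    lp_feasible edge lab yv ye -> lp_objective xe <= lp_objective ye.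

(* Main.v *)
Require Import Defs.
From mathcomp Require Import all_boot all_order all_algebra.
From mathcomp Require Import ring lra.
Import Order.TTheory GRing.Theory Num.Theory.
Local Open Scope ring_scope.

Theorem mainTheorem5 (R : realFieldType) (V E : finType) (k : nat)
  (edge : E -> {set V}) (lab : E -> 'I_k)
  (Hne : forall e, edge e != set0)
  (xv : V -> 'I_k -> R) (xe : E -> R)
  (Hopt : lp_optimal edge lab xv xe) :
  (* the sets S_c = {v | xv v c < 1/2} are pairwise disjoint, so Y is well defined *)
  (forall (v : V) (c1 c2 : 'I_k), xv v c1 < 1/2 -> xv v c2 < 1/2 -> c1 = c2) /\
  (* any Y that puts S_c into c (other nodes arbitrary) is a 2-approximation *)
  (forall Y : V -> 'I_k,
     (forall (v : V) (c : 'I_k), xv v c < 1/2 -> Y v = c) ->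
     forall Y' : V -> 'I_k,
       (CatEdgeClus edge lab Y <= 2 * CatEdgeClus edge lab Y')%N).
Proof.
case: Hopt => [[Hsum Hcon Hxv Hxe] Hmin].
split.
  move=> v c1 c2 h1 h2; apply/eqP; apply: contraT => hne.
  have H1 : \sum_(c < k) (1 - xv v c) = 1.
    rewrite sumrB sumr_const card_ord Hsum; lra.
  move: H1; rewrite (bigD1 c1) //= (bigD1 c2) /=; last by rewrite eq_sym hne.
  have : 0 <= \sum_(i < k | (i != c1) && (i != c2)) (1 - xv v i).
    apply: sumr_ge0 => i _; have := Hxv v i; case/andP => _ ?; lra.
  lra.
move=> Y HY Y'.
pose yv := fun (v : V) (c : 'I_k) => 1 - ((Y' v == c)%:R : R).
pose ye := fun e => ((mY edge lab Y' e)%:R : R).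
have Hf : lp_feasible edge lab yv ye.
  split.
  - move=> v; rewrite /yv sumrB sumr_const card_ord (bigD1 (Y' v)) //= eqxx.
    rewrite big1 ?addr0 //; last by move=> c /negbTE; rewrite eq_sym => ->.
  - move=> c e v hl hv; rewrite /yv /ye; case: eqP => hy.
      by rewrite subrr ler0n.
    have -> : mY edge lab Y' e = 1%N.
      rewrite /mY; have -> // : [exists i in edge e, Y' i != lab e].
      by apply/existsP; exists v; rewrite hv hl /=; apply/eqP.
    by rewrite subr0.
  - by move=> v c; rewrite /yv; case: (_ == _) => /=; lra.
  - by move=> e; rewrite /ye /mY; case: [exists _ in _, _] => /=; lra.
have Hle := Hmin _ _ Hf.
rewrite -(ler_nat R) natrM /CatEdgeClus !natr_sum.
apply: (@le_trans _ _ (2 * lp_objective xe)); last first.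
  rewrite ler_pM2l //; apply: (le_trans Hle); by [].
rewrite /lp_objective mulr_sumr; apply: ler_sum => e _.
rewrite /mY; case: existsP => [[i /andP [hi hy]]|_] /=; last first.
  by have := Hxe e; case/andP => ? _; lra.
have hx : 1/2 <= xv i (lab e).
  rewrite leNgt; apply/negP => hlt; move: hy; by rewrite (HY _ _ hlt) eqxx.
have := Hcon (lab e) e i erefl hi; lra.
Qed.
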